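(* Let $d\ge3$ and let $(X_{t,1},\dots,X_{t,d})$, $t=1,\dots,T$, be i.i.d. binary random vectors, each following a determinantal point process with correlation kernel $K_0$, where $K_0$ is real symmetric with all eigenvalues in $(0,1)$ and all entries nonzero. For a reference index $r\in\{1,\dots,d\}$, define the symmetric matrix estimator $\widehat{K}^{(r)}_T$ by: $\widehat{K}^{(r)}_{ii}=\frac1T\sum_t X_{t,i}$; for $i\ne j$, $\widehat{|K_{ij}|}=\sqrt{\widehat{K}^{(r)}_{ii}\widehat{K}^{(r)}_{jj}-\frac1T\sum_t X_{t,i}X_{t,j}}$; $\widehat{K}^{(r)}_{rj}=\widehat{K}^{(r)}_{jr}=\widehat{|K_{rj}|}$ for $j\neq r$; and for distinct $i,j\ne r$, $\widehat{K}^{(r)}_{ij}=\widehat{\mathrm{sgn}}^{(r)}_{ij}\,\widehat{|K_{ij}|}$ with $$\widehat{\mathrm{sgn}}^{(r)}_{ij}=\mathrm{sgn}\Big(\tfrac1T\textstyle\sum_t X_{t,r}X_{t,i}X_{t,j}-\widehat{K}^{(r)}_{rr}\widehat{K}^{(r)}_{ii}\widehat{K}^{(r)}_{jj}+\widehat{K}^{(r)}_{rr}\widehat{|K_{ij}|}^2+\widehat{K}^{(r)}_{ii}\widehat{|K_{rj}|}^2+\widehat{K}^{(r)}_{jj}\widehat{|K_{ri}|}^2\Big).$$ Then for any $r,r'\in\{1,\dots,d\}$, almost surely, for all $T$ large enough there exists a diagonal matrix $D$ with diagonal entries in $\{-1,1\}$ such that $\widehat{K}^{(r)}_T=D\,\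widehat{K}^{(r')}_T\,D$.
   Context: A binary random vector $(X_1,\dots,X_d)$ follows a determinantal point process with correlation kernel $K$ if $\mathbb{P}[X_j=1\ \forall j\in s]=\det K_s$ for all $s\subseteq\{1,\dots,d\}$, with $K_s$ the principal submatrix indexed by $s$. $\mathrm{sgn}(x)$ is $1,-1,0$ according as $x>0,x<0,x=0$. The estimator $\widehat{K}^{(r)}_T$ is the estimator obtained when variable $r$ is indexed as the first variable (its row is estimated as positive); on the event where its defining expressions are undefined it takes an arbitrary conventional value. *)

(* Defs.v *)
From HB Require Import structures.
From mathcomp Require Import all_boot all_order all_algebra.
From mathcomp Require Import all_classical all_reals all_analysis.
Set Implicit Arguments. Unset Strict Implicit. Unset Printing Implicit Defensive.
Import Order.TTheory GRing.Theory Num.Theory.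
Local Open Scope ring_scope.
Local Open Scope classical_set_scope.

Definition principal_submx (R : ringType) (d : nat) (K : 'M[R]_d)
    (s : {set 'I_d}) : 'M[R]_#|s| :=
  \matrix_(i, j) K (enum_val i) (enum_val j).

Definition is_DPP (R : realType) (dsp : measure_display) (Omega : measurableType dsp)
    (P : probability Omega R) (d : nat) (K : 'M[R]_d)
    (Y : Omega -> {ffun 'I_d -> bool}) : Prop :=
  forall s : {set 'I_d},
    P [set w | forall j, j \in s -> Y w j] = (\det (principal_submx K s))%:E.

(* mutual independence of the family (X t)_t : product rule over every
   finite subfamily and every choice of (finite, hence measurable) events *)
Definition mutually_independent (R : realType) (dsp : measure_display)
    (Omega : measurableType dsp) (P : probability Omega R) (V : finType)
    (X : nat -> Omega -> V) : Prop :=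
  forall (F : seq nat) (A : nat -> {set V}), uniq F ->
    P (\bigcap_(t in [set` F]) (X t @^-1` [set v | v \in A t]))
    = (\prod_(t <- F) P (X t @^-1` [set v | v \in A t]))%E.

Section Estimator.
Variables (R : realType) (Omega : Type) (d : nat).
Variables (X : nat -> Omega -> {ffun 'I_d -> bool}) (T : nat) (w : Omega).

Definition emp_mean (f : nat -> bool) : R := (\sum_(t < T) (f t)%:R) / T%:R.

Definition Kdiag_hat (i : 'I_d) : R := emp_mean (fun t => X t w i).

(* \hat{|K_ij|}  (Num.sqrt of a negative number is 0: conventional value) *)
Definition absK_hat (i j : 'I_d) : R :=
  Num.sqrt (Kdiag_hat i * Kdiag_hat j - emp_mean (fun t => X t w i && X t w j)).

Definition sgn_hat (r i j : 'I_d) : R :=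
  Num.sg (emp_mean (fun t => [&& X t w r, X t w i & X t w j])
          - Kdiag_hat r * Kdiag_hat i * Kdiag_hat j
          + Kdiag_hat r * absK_hat i j ^+ 2
          + Kdiag_hat i * absK_hat r j ^+ 2
          + Kdiag_hat j * absK_hat r i ^+ 2).

Definition K_hat (r : 'I_d) : 'M[R]_d :=
  \matrix_(i, j)
    if i == j then Kdiag_hat i
    else if i == r then absK_hat r j
    else if j == r then absK_hat r i
    else sgn_hat r i j * absK_hat i j.

End Estimator.

(* Main.v *)
Require Import Defs.
From HB Require Import structures.
From mathcomp Require Import all_boot all_order all_algebra.
From mathcomp Require Import all_classical all_reals all_analysis.
From mathcomp Require Import ring lra.
Import Order.TTheory GRing.Theory Num.Theory.
Local Open Scope ring_scope.
Local Open Scope classical_set_scope.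
Section Mom.
Variables (R : realFieldType) (p : R).
Hypotheses (p0 : 0 <= p) (p1 : p <= 1).
Definition wg (x : bool) : R := if x then p else 1 - p.
Definition yv (x : bool) : R := (x : nat)%:R - p.
Definition mu (m : nat) : R := \sum_(x : bool) wg x * yv x ^+ m.

Lemma mu0 : mu 0 = 1.
Proof. by rewrite /mu big_bool /= /wg !expr0 !mulr1 addrC subrK. Qed.
Lemma mu1 : mu 1 = 0.
Proof. rewrite /mu big_bool /= /wg /yv /= !expr1; ring. Qed.
Lemma mu_le1 m : `|mu m| <= 1.
Proof.
rewrite /mu big_bool /= /wg /yv /=.
rewrite (le_trans (ler_normD _ _)) // !normrM !normrX.
have h1 : `|1 - p| ^+ m <= 1 by rewrite exprn_ile1 // ger0_norm ?subr_ge0 // lerBlDr lerDl.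
have h2 : `|0 - p| ^+ m <= 1 by rewrite exprn_ile1 // sub0r normrN ger0_norm.
rewrite ger0_norm // [`|1 - p|]ger0_norm ?subr_ge0 //.
rewrite add0r in h2; rewrite sub0r normrN in h2 *.
have a : p * `|1 - p| ^+ m <= p by rewrite ler_piMr.
have b : (1 - p) * `|p| ^+ m <= 1 - p by rewrite ler_piMr // subr_ge0.
rewrite [`|1 - p|]ger0_norm ?subr_ge0 // in a.
lra.
Qed.
Lemma sum4 (I : finType) (a : I -> R) :
  (\sum_i a i) ^+ 4 = \sum_s \sum_t \sum_u \sum_v (a s * a t * a u * a v).
Proof.
have e : forall y : R, y ^+ 4 = y * (y * (y * y)) by move=> y; rewrite !exprS expr0 mulr1.
rewrite e !mulr_suml.
apply eq_bigr => s _; rewrite mulr_sumr; apply eq_bigr => t _.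
rewrite mulr_sumr mulr_sumr; apply eq_bigr => u _.
rewrite !mulr_sumr; apply eq_bigr => v _.
by rewrite !mulrA.
Qed.
Lemma comb (T : eqType) (s t u v : T) :
  ((s == s) + (s == t) + (s == u) + (s == v) != 1)%N ->
  ((t == s) + (t == t) + (t == u) + (t == v) != 1)%N ->
  ((u == s) + (u == t) + (u == u) + (u == v) != 1)%N ->
  ((v == s) + (v == t) + (v == u) + (v == v) != 1)%N ->
  [|| (s == t) && (u == v), (s == u) && (t == v) | (s == v) && (t == u)].
Proof.
rewrite [t == s]eq_sym [u == s]eq_sym [v == s]eq_sym [u == t]eq_sym [v == t]eq_sym [v == u]eq_sym !eqxx.
case: (s =P t) => e1; case: (s =P u) => e2; case: (s =P v) => e3;
case: (t =P u) => e4; case: (t =P v) => e5; case: (u =P v) => e6 //=; congruence.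
Qed.

Definition mlt n (s t u v i : 'I_n) : nat := ((i == s) + (i == t) + (i == u) + (i == v))%N.

Arguments mlt {n}.
Lemma prod_ind n (b : {ffun 'I_n -> bool}) (j : 'I_n) :
  \prod_(i < n) yv (b i) ^+ (i == j) = yv (b j).
Proof.
rewrite (bigD1 j) //= eqxx expr1 big1 ?mulr1 // => i /negbTE ->.
by rewrite expr0.
Qed.

Lemma term_eq n (s t u v : 'I_n) :
  \sum_(b : {ffun 'I_n -> bool}) (\prod_(i < n) wg (b i)) * (yv (b s) * yv (b t) * yv (b u) * yv (b v))
  = \prod_(i < n) mu (mlt s t u v i).
Proof.
rewrite /mu bigA_distr_bigA /=; apply eq_bigr => b _.
rewrite big_split /=; congr (_ * _).
rewrite /mlt; under eq_bigr => i _ do rewrite !exprD.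
by rewrite !big_split /= !prod_ind.
Qed.

Lemma term_le n (s t u v : 'I_n) :
  `|\prod_(i < n) mu (mlt s t u v i)| <=
  ((((s == t) && (u == v)) + ((s == u) && (t == v)) + ((s == v) && (t == u)))%N)%:R.
Proof.
have [H|H] := boolP [|| (s == t) && (u == v), (s == u) && (t == v) | (s == v) && (t == u)].
  apply: (@le_trans _ _ 1).
    rewrite normr_prod.
    suff /andP[] : 0 <= \prod_(i < n) `|mu (mlt s t u v i)| <= 1 by [].
    apply: (@big_ind _ (fun x => 0 <= x <= 1)) => //= [|x y /andP[x0 x1] /andP[y0 y1]|i _].
    - by rewrite ler01 lexx.
    - by rewrite mulr_ge0 //= mulr_ile1.
    - by rewrite normr_ge0 mu_le1.
  by rewrite ler1n; case/or3P: H => /andP[-> ->]; rewrite ?addn1 ?addnS.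
have : exists j, mlt s t u v j == 1%N.
  apply/existsP; apply: contraNT H; rewrite negb_exists => /forallP A.
  by apply: comb; apply: A.
case=> j /eqP hj.
by rewrite (bigD1 j) //= hj mu1 mul0r normr0.
Qed.

Lemma sum_ind n (j : 'I_n) : \sum_(i < n) ((j == i) : nat)%:R = 1 :> R.
Proof.
rewrite (bigD1 j) //= eqxx big1 ?addr0 // => i; rewrite eq_sym => /negbTE ->.
by [].
Qed.

Lemma bnat_and (a b : bool) : ((a && b) : nat)%:R = (a : nat)%:R * (b : nat)%:R :> R.
Proof. by case: a; case: b; rewrite /= ?mulr1 ?mulr0 ?mul0r. Qed.

Lemma sum_c n :
  \sum_(s < n) \sum_(t < n) \sum_(u < n) \sum_(v < n)
    ((((s == t) && (u == v)) + ((s == u) && (t == v)) + ((s == v) && (t == u)))%N)%:R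
  = 3 * (n%:R) ^+ 2 :> R.
Proof.
transitivity (\sum_(s < n) \sum_(t < n) ((((s == t) : nat)%:R : R) *+ n + 2)).
  apply eq_bigr => s _; apply eq_bigr => t _.
  under eq_bigr => u _ do under eq_bigr => v _ do rewrite !natrD !bnat_and.
  under eq_bigr => u _ do rewrite !big_split /= -!mulr_sumr -mulr_suml !sum_ind mulr1 mul1r.
  rewrite !big_split /=; under [X in _ + X + _]eq_bigr => i _ do rewrite mulr1.
  by rewrite !sum_ind sumr_const card_ord -addrA.
under eq_bigr => s _ do rewrite big_split /= sumrMnl sum_ind sumr_const card_ord.
rewrite sumr_const card_ord -(mulr_natr (_ + _)) -[2 *+ n]mulr_natr; ring.
Qed.

Lemma sum4c (I : finType) (c : R) (a : I -> R) :
  c * (\sum_i a i) ^+ 4 = \sum_s \sum_t \sum_u \sum_v c * (a s * a t * a u * a v).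
Proof.
rewrite sum4 mulr_sumr; apply eq_bigr => s _; rewrite mulr_sumr; apply eq_bigr => t _.
rewrite mulr_sumr; apply eq_bigr => u _; by rewrite mulr_sumr.
Qed.

Lemma mom4 n :
  \sum_(b : {ffun 'I_n -> bool}) (\prod_(i < n) wg (b i)) * (\sum_(i < n) yv (b i)) ^+ 4
  <= 3 * (n%:R) ^+ 2.
Proof.
under eq_bigr => b _ do rewrite sum4c.
rewrite exchange_big /=.
under eq_bigr => s _ do rewrite exchange_big /=.
under eq_bigr => s _ do under eq_bigr => t _ do rewrite exchange_big /=.
under eq_bigr => s _ do under eq_bigr => t _ do under eq_bigr => u _ do rewrite exchange_big /=.
rewrite -sum_c.
apply: ler_sum => s _; apply: ler_sum => t _; apply: ler_sum => u _; apply: ler_sum => v _.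
rewrite term_eq; apply: (le_trans (ler_norm _)); exact: term_le.
Qed.

End Mom.
Arguments wg {R}.
Arguments yv {R}.
Arguments mu {R}.
Section Prob.
Context {R : realType} {dsp : measure_display} {Omega : measurableType dsp}
  (P : probability Omega R) {V : finType} (X : nat -> Omega -> V).
Hypothesis mX : forall t v, measurable (X t @^-1` [set v]).
Hypothesis indep : mutually_independent P X.
Variables (S : {set V}) (p : R).
Hypothesis HP : forall t, P (X t @^-1` [set v | v \in S]) = p%:E.

Lemma pre_meas t (A : {set V}) : measurable (X t @^-1` [set v | v \in A]).
Proof.
have E : forall s : seq V, X t @^-1` [set v | v \in s] =
    \big[setU/set0]_(v <- s) X t @^-1` [set v].
  elim => [|v s IH]; first by rewrite big_nil; apply/seteqP; split => w.
  rewrite big_cons -IH; apply/seteqP; split => w /=; rewrite in_cons.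
    by case/orP => [/eqP ->|H]; [left|right].
  by case => [->|->]; rewrite ?eqxx ?orbT.
have -> : X t @^-1` [set v | v \in A] = X t @^-1` [set v | v \in enum A].
  by apply/seteqP; split => w /=; rewrite mem_enum.
rewrite E; apply: (big_ind (fun B => measurable B)) => //.
exact: measurableU.
Qed.

Definition bvec n w : {ffun 'I_n -> bool} := [ffun i : 'I_n => X i w \in S].
Definition Ab n (b : {ffun 'I_n -> bool}) (t : nat) : {set V} :=
  if insub t is Some i then (if b i then S else ~: S) else [set: V]%SET.
Arguments Ab {n}.
Local Notation wgt := (wg p).

Lemma cyl_eq n b : [set w | bvec n w = b] =
  \bigcap_(t in [set` iota 0 n]) X t @^-1` [set v | v \in Ab b t].
Proof.
apply/seteqP; split => w /=.
  move=> <- t /=; rewrite mem_iota add0n => /andP[_ tn].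
  rewrite /Ab insubT /= ffunE; case: ifP => //.
  by rewrite inE => ->.
move=> H; apply/ffunP => i; rewrite ffunE.
have := H i; rewrite /= mem_iota add0n ltn_ord => /(_ isT).
rewrite /Ab valK; case: (b i) => //; by rewrite inE => /negbTE.
Qed.

Lemma cyl_meas n b : measurable [set w | bvec n w = b].
Proof. rewrite cyl_eq; apply: bigcap_measurableType => t _; exact: pre_meas. Qed.

Lemma cyl_P n b : P [set w | bvec n w = b] = (\prod_(i < n) wgt (b i))%:E.
Proof.
rewrite cyl_eq indep ?iota_uniq // -prodEFin.
have -> : iota 0 n = index_iota 0 n by rewrite /index_iota subn0.
rewrite big_mkord; apply: eq_bigr => i _.
rewrite /Ab valK /wgt; case: (b i); first exact: HP.
have -> : X i @^-1` [set v | v \in ~: S] = ~` (X i @^-1` [set v | v \in S]).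
  by apply/seteqP; split => w /=; rewrite inE => /negP.
by rewrite probability_setC ?HP //; exact: pre_meas.
Qed.

Lemma seq_ev n (s : seq {ffun 'I_n -> bool}) :
  measurable [set w | bvec n w \in s] /\
  (uniq s -> P [set w | bvec n w \in s] = (\sum_(b <- s) \prod_(i < n) wgt (b i))%:E).
Proof.
elim: s => [|b s [IHm IHP]].
  rewrite (_ : [set w | _] = set0); last by apply/seteqP; split => w.
  by split => // _; rewrite measure0 big_nil.
have E : [set w | bvec n w \in b :: s] =
    [set w | bvec n w = b] `|` [set w | bvec n w \in s].
  apply/seteqP; split => w /=; rewrite in_cons.
    by case/orP => [/eqP ->|H]; [left|right].
  by case => [->|->]; rewrite ?eqxx ?orbT.
rewrite E; split; first exact: (measurableU _ _ (cyl_meas _ b) IHm).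
rewrite cons_uniq => /andP[bs us].
rewrite measureU; [|exact: cyl_meas|exact: IHm|].
  by rewrite big_cons EFinD -(cyl_P n b) -(IHP us).
apply/seteqP; split => w //= [e]; rewrite e => H.
by rewrite H in bs.
Qed.

Lemma ev_meas n (g : pred {ffun 'I_n -> bool}) : measurable [set w | g (bvec n w)].
Proof.
have [+ _] := seq_ev _ (enum g).
by rewrite (_ : [set w | _ \in _] = [set w | g (bvec n w)]) //;
  apply/seteqP; split => w /=; rewrite mem_enum.
Qed.

Lemma ev_P n (g : pred {ffun 'I_n -> bool}) :
  P [set w | g (bvec n w)] = (\sum_(b | g b) \prod_(i < n) wgt (b i))%:E.
Proof.
have [_ +] := seq_ev _ (enum g).
rewrite (_ : [set w | _ \in _] = [set w | g (bvec n w)]); last first.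
  by apply/seteqP; split => w /=; rewrite mem_enum.
by move=> ->; rewrite ?enum_uniq // big_enum.
Qed.

Lemma p_ge0 : 0 <= p.
Proof. by have := HP 0; rewrite -lee_fin => <-. Qed.
Lemma p_le1 : p <= 1.
Proof. by have := HP 0; rewrite -lee_fin => <-; apply: probability_le1; exact: pre_meas. Qed.

Lemma tele (C : R) N : \sum_(0 <= n < N) C / ((n.+1)%:R * (n.+2)%:R) = C * (1 - 1 / (N.+1)%:R).
Proof.
elim: N => [|N IH]; first by rewrite big_geq // divr1 subrr mulr0.
rewrite big_nat_recr //= IH.
have h1 : (N.+1)%:R != 0 :> R by rewrite pnatr_eq0.
have h2 : (N.+2)%:R != 0 :> R by rewrite pnatr_eq0.
rewrite -[(N.+2)%:R]natr1 -[(N.+1)%:R]natr1 in h1 h2 *.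
field.
by rewrite h1 h2.
Qed.

Lemma slln (δ : R) : 0 < δ ->
  {ae P, forall w, exists N, forall n, (N <= n)%N ->
     `|\sum_(i < n.+1) (((X i w \in S) : nat)%:R - p)| < n.+1%:R * δ}.
Proof.
move=> d0.
pose g k (b : {ffun 'I_k.+1 -> bool}) := k.+1%:R * δ <= `|\sum_(i < k.+1) yv p (b i)|.
pose F k := [set w | g k (bvec k.+1 w)].
have mF : forall k, measurable (F k) := fun k => ev_meas _ (g k).
have E : forall m w, \sum_(i < m.+1) yv p (bvec m.+1 w i) =
    \sum_(i < m.+1) (((X i w \in S) : nat)%:R - p).
  by move=> m w; apply eq_bigr => i _; rewrite /yv ffunE.
have PF : forall k, (P (F k) <= (6 / δ ^+ 4 / ((k.+1)%:R * (k.+2)%:R))%:E)%E.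
  move=> k; rewrite /F ev_P lee_fin.
  set c := k.+1%:R * δ.
  have c0 : 0 < c by rewrite mulr_gt0.
  have W0 : forall b : {ffun 'I_k.+1 -> bool}, 0 <= \prod_(i < k.+1) wgt (b i).
    move=> b; apply: prodr_ge0 => i _; rewrite /wg; case: (b i);
      [exact: p_ge0|by rewrite subr_ge0 p_le1].
  apply: (@le_trans _ _ (\sum_(b : {ffun 'I_k.+1 -> bool}) (\prod_(i < k.+1) wgt (b i)) *
     (\sum_(i < k.+1) yv p (b i)) ^+ 4 / c ^+ 4)).
    rewrite [X in _ <= X](bigID (g k)) /= -[X in X <= _]addr0.
    apply: lerD.
      apply: ler_sum => b gb; rewrite -mulrA ler_peMr //.
      rewrite ler_pdivlMr ?exprn_gt0 // mul1r.
      have h : c ^+ 4 <= `|\sum_(i < k.+1) yv p (b i)| ^+ 4.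
        by apply: lerXn2r; rewrite ?nnegrE ?normr_ge0 ?(ltW c0)...
      by rewrite (le_trans h) // -normrX ger0_norm // exprn_even_ge0.
    apply: sumr_ge0 => b _; apply: mulr_ge0; last by rewrite invr_ge0 exprn_ge0 // ltW.
    by apply: mulr_ge0 => //; rewrite exprn_even_ge0.
  rewrite -mulr_suml ler_pdivrMr ?exprn_gt0 //.
  apply: le_trans (mom4 _ _ p_ge0 p_le1 k.+1) _.
  rewrite /c; set x := k.+1%:R.
  have x1 : 1 <= x by rewrite /x ler1n.
  have -> : k.+2%:R = x + 1 by rewrite /x -natr1.
  have x0 : x != 0 by rewrite gt_eqF // (lt_le_trans ltr01).
  have d00 : δ != 0 by rewrite gt_eqF.
  have x10 : x + 1 != 0 by rewrite gt_eqF // ltr_wpDl // ler0n.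
  have -> : 6 / δ ^+ 4 / (x * (x + 1)) * (x * δ) ^+ 4 = 6 * x ^+ 3 / (x + 1).
    have hk : 0 <= k%:R :> R := ler0n _ _.
    by field; rewrite d00 andbT; apply/andP; split; apply: lt0r_neq0; lra.
  rewrite ler_pdivlMr ?ltr_wpDl // ?ler0n //.
  nra.
have Hsum : (\sum_(n <oo) P (F n) < +oo)%E.
  apply: (@le_lt_trans _ _ (6 / δ ^+ 4)%:E); last exact: ltry.
  apply: lime_le; first by apply: is_cvg_nneseries => n _ _; exact: measure_ge0.
  apply: nearW => N.
  apply: (@le_trans _ _ (\sum_(0 <= n < N) (6 / δ ^+ 4 / ((n.+1)%:R * (n.+2)%:R))%:E)%E).
    by apply: lee_sum => n _; exact: PF.
  rewrite sumEFin lee_fin tele ler_piMr //.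
    by rewrite divr_ge0 // exprn_ge0 // ltW.
have P0 := lim_sup_set_cvg0 mF Hsum.
exists (lim_sup_set F); split => //.
  rewrite /lim_sup_set; apply: bigcap_measurableType => n _.
  by apply: bigcup_measurable => j _; exact: mF.
move=> w /= nQ n _ /=.
apply: contra_notP nQ => H.
exists n => m nm; rewrite -E ltNge; apply/negP => Fm; apply: H.
by exists m.
Qed.

End Prob.

Lemma det2 (R : comNzRingType) (A : 'M[R]_2) (a : nat -> nat -> R) :
  (forall i j, A i j = a i j) -> \det A = a 0 0 * a 1 1 - a 0 1 * a 1 0.
Proof.
move=> HA.
rewrite (expand_det_row _ 0) !big_ord_recl big_ord0 /cofactor !det_mx11 !mxE !HA /=.
rewrite expr0 expr1; ring.
Qed.

Lemma det2' (R : comNzRingType) (A : 'M[R]_2) : \det A = A 0 0 * A 1 1 - A 0 1 * A 1 0.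
Proof. by rewrite (@det2 _ _ (fun i j => A (inord i) (inord j))) => [|i j]; rewrite ?inord_val //; congr (_ * _ - _ * _); congr (A _ _); apply/val_inj; rewrite /= inordK. Qed.

Lemma det3 (R : comNzRingType) (A : 'M[R]_3) (a : nat -> nat -> R) :
  (forall i j, A i j = a i j) ->
  \det A = a 0 0 * a 1 1 * a 2 2 + a 0 1 * a 1 2 * a 2 0 + a 0 2 * a 1 0 * a 2 1
   - a 0 0 * a 1 2 * a 2 1 - a 0 1 * a 1 0 * a 2 2 - a 0 2 * a 1 1 * a 2 0.
Proof.
move=> HA.
rewrite (expand_det_row _ 0) !big_ord_recl big_ord0 /cofactor !det2' !mxE !HA /=.
rewrite /bump /=.
rewrite expr0 expr1 expr2; ring.
Qed.

Section Det.
Variables (R : realType) (d : nat) (K : 'M[R]_d).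
Hypothesis Ks : forall i j, K i j = K j i.

Definition ps (s : {set 'I_d}) : R := \det (principal_submx K s).

Lemma ps_entry (s : {set 'I_d}) (i0 : 'I_d) (x y : 'I_#|s|) :
  principal_submx K s x y = K (nth i0 (enum s) x) (nth i0 (enum s) y).
Proof. by rewrite /principal_submx mxE !(enum_val_nth i0). Qed.

Lemma en_in (s : {set 'I_d}) (i0 : 'I_d) k : (k < #|s|)%N -> nth i0 (enum s) k \in s.
Proof. by move=> h; rewrite -mem_enum mem_nth // -cardE. Qed.

Lemma en_neq (s : {set 'I_d}) (i0 : 'I_d) k l : (k < #|s|)%N -> (l < #|s|)%N -> k != l ->
  nth i0 (enum s) k != nth i0 (enum s) l.
Proof. by move=> hk hl; rewrite nth_uniq ?enum_uniq // -cardE. Qed.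

Lemma ps_gen (s : {set 'I_d}) (i0 : 'I_d) n : #|s| = n ->
  exists A : 'M[R]_n, ps s = \det A /\
    forall x y : 'I_n, A x y = K (nth i0 (enum s) x) (nth i0 (enum s) y).
Proof.
move=> e; rewrite /ps; move: (principal_submx K s) (ps_entry s i0).
by rewrite e => A HA; exists A.
Qed.

Lemma ps1 i : ps [set i]%SET = K i i.
Proof.
have [A [-> HA]] := ps_gen _ i _ (cards1 i).
rewrite det_mx11 HA.
have := en_in ([set i]%SET) i 0; rewrite cards1 inE => /(_ isT) /eqP ->.
by [].
Qed.

Lemma ps2 i j : i != j -> ps [set i; j]%SET = K i i * K j j - K i j ^+ 2.
Proof.
move=> ij.
have c2 : #|[set i; j]%SET| = 2 by rewrite cards2 ij.
have [A [-> HA]] := ps_gen _ i _ c2.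
rewrite (@det2 _ A (fun x y => K (nth i (enum [set i; j]%SET) x) (nth i (enum [set i; j]%SET) y))) //.
have m0 := en_in ([set i; j]%SET) i 0; have m1 := en_in ([set i; j]%SET) i 1.
have d01 := en_neq ([set i; j]%SET) i 0 1.
rewrite c2 in m0 m1 d01.
move: (m0 isT) (m1 isT) (d01 isT isT isT); rewrite !inE.
move=> /orP[]/eqP-> /orP[]/eqP->; rewrite ?eqxx // => _; rewrite ?[K j i]Ks; ring.
Qed.

Definition G (r i j : 'I_d) : R := K r r * K i i * K j j + 2 * (K r i * K i j * K r j)
  - K r r * K i j ^+ 2 - K i i * K r j ^+ 2 - K j j * K r i ^+ 2.

Lemma ps3 r i j : r != i -> r != j -> i != j -> ps [set r; i; j]%SET = G r i j.
Proof.
move=> ri rj ij.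
have c3 : #|[set r; i; j]%SET| = 3.
  by rewrite -finset.setUA cardsU1 cards2 ij !inE negb_or ri rj.
have [A [-> HA]] := ps_gen _ r _ c3.
rewrite (@det3 _ A (fun x y => K (nth r (enum [set r; i; j]%SET) x) (nth r (enum [set r; i; j]%SET) y))) //.
have m0 := en_in ([set r; i; j]%SET) r 0.
have m1 := en_in ([set r; i; j]%SET) r 1.
have m2 := en_in ([set r; i; j]%SET) r 2.
have d01 := en_neq ([set r; i; j]%SET) r 0 1.
have d02 := en_neq ([set r; i; j]%SET) r 0 2.
have d12 := en_neq ([set r; i; j]%SET) r 1 2.
rewrite c3 in m0 m1 m2 d01 d02 d12.
move: (m0 isT) (m1 isT) (m2 isT) (d01 isT isT isT) (d02 isT isT isT) (d12 isT isT isT).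
rewrite !inE -!orbA /G.
move=> /or3P[]/eqP-> /or3P[]/eqP-> /or3P[]/eqP->; rewrite ?eqxx // => _ _ _;
  rewrite ?[K i r]Ks ?[K j r]Ks ?[K j i]Ks; ring.
Qed.

End Det.
Section NumPart.
Variable R : realType.

Lemma sq_lip (x y : R) : 0 <= y -> `|Num.sqrt x ^+ 2 - y| <= `|x - y|.
Proof.
move=> y0; case: (leP 0 x) => hx; first by rewrite sqr_sqrtr.
rewrite ltr0_sqrtr // expr0n /= sub0r normrN ger0_norm // ler0_norm; last by lra.
lra.
Qed.

Lemma mul_lip (a b a' b' : R) : `|a| <= 1 -> `|b'| <= 1 ->
  `|a * b - a' * b'| <= `|a - a'| + `|b - b'|.
Proof.
move=> ha hb.
have -> : a * b - a' * b' = a * (b - b') + b' * (a - a') by ring.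
apply: le_trans (ler_normD _ _) _; rewrite !normrM.
have h1 := normr_ge0 (b - b'); have h2 := normr_ge0 (a - a').
have h3 := normr_ge0 a; have h4 := normr_ge0 b'.
nra.
Qed.

Lemma sg_close (E L : R) : `|E - L| < `|L| -> Num.sg E = Num.sg L.
Proof.
case: (ltrgtP L 0) => hL.
- rewrite [`|L|]ltr0_norm // ltr_norml => /andP[h1 h2].
  by rewrite !ltr0_sg //; lra.
- rewrite [`|L|]gtr0_norm // ltr_norml => /andP[h1 h2].
  by rewrite !gtr0_sg //; lra.
- by rewrite hL normr0 ltNge normr_ge0.
Qed.

Lemma sign_est (Krr Kii Kjj Kri Kij Krj ar ai aj bij brj bri c δ : R) :
  0 <= ar <= 1 -> 0 <= ai <= 1 -> 0 <= aj <= 1 ->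
  0 <= Krr <= 1 -> 0 <= Kii <= 1 -> 0 <= Kjj <= 1 ->
  0 <= Kii * Kjj - Kij ^+ 2 -> 0 <= Krr * Kjj - Krj ^+ 2 -> 0 <= Krr * Kii - Kri ^+ 2 ->
  `|ar - Krr| <= δ -> `|ai - Kii| <= δ -> `|aj - Kjj| <= δ ->
  `|bij - (Kii * Kjj - Kij ^+ 2)| <= δ -> `|brj - (Krr * Kjj - Krj ^+ 2)| <= δ ->
  `|bri - (Krr * Kii - Kri ^+ 2)| <= δ ->
  `|c - (Krr * Kii * Kjj + 2 * (Kri * Kij * Krj) - Krr * Kij ^+ 2 - Kii * Krj ^+ 2 - Kjj * Kri ^+ 2)| <= δ ->
  16 * δ < 2 * `|Kri * Kij * Krj| ->
  Num.sg (c - ar * ai * aj + ar * Num.sqrt (ai * aj - bij) ^+ 2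
     + ai * Num.sqrt (ar * aj - brj) ^+ 2 + aj * Num.sqrt (ar * ai - bri) ^+ 2)
  = Num.sg Kri * Num.sg Kij * Num.sg Krj.
Proof.
move=> /andP[ar0 ar1] /andP[ai0 ai1] /andP[aj0 aj1] /andP[Kr0 Kr1] /andP[Ki0 Ki1] /andP[Kj0 Kj1].
move=> pij prj pri er ei ej eij erj eri ec hd.
have n1 : forall x : R, 0 <= x <= 1 -> `|x| <= 1.
  by move=> x /andP[x0 x1]; rewrite ger0_norm.
have sqb : forall (x y : R), 0 <= x <= 1 -> 0 <= y <= 1 -> `|x * y| <= 1.
  by move=> x y /andP[? ?] /andP[? ?]; rewrite normrM; apply: mulr_ile1 => //; rewrite ?normr_ge0 ?n1 ?ger0_norm //; apply/andP.
have Kb : forall x y z : R, 0 <= x <= 1 -> 0 <= y <= 1 -> 0 <= x * y - z ^+ 2 -> `|z ^+ 2| <= 1.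
  move=> x y z hx hy hz; rewrite ger0_norm ?sqr_ge0 //.
  have := sqb x y hx hy; rewrite ler_norml => /andP[_ h]; lra.
have term : forall (a1 a2 b K1 K2 Kz a Kd : R), 0 <= a1 <= 1 -> 0 <= a2 <= 1 ->
    0 <= K1 <= 1 -> 0 <= K2 <= 1 -> 0 <= K1 * K2 - Kz ^+ 2 -> 0 <= a <= 1 ->
    `|a1 - K1| <= δ -> `|a2 - K2| <= δ -> `|b - (K1 * K2 - Kz ^+ 2)| <= δ -> `|a - Kd| <= δ ->
    `|a * Num.sqrt (a1 * a2 - b) ^+ 2 - Kd * Kz ^+ 2| <= 4 * δ.
  move=> a1 a2 b K1 K2 Kz a Kd h1 h2 h3 h4 h5 h6 e1 e2 e3 e4.
  have m12 := mul_lip a1 a2 K1 K2 (n1 a1 h1) (n1 K2 h4).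
  have s := sq_lip (a1 * a2 - b) (Kz ^+ 2) (sqr_ge0 Kz).
  have m := mul_lip a (Num.sqrt (a1 * a2 - b) ^+ 2) Kd (Kz ^+ 2) (n1 a h6) (Kb K1 K2 Kz h3 h4 h5).
  have eq : a1 * a2 - b - Kz ^+ 2 = (a1 * a2 - K1 * K2) - (b - (K1 * K2 - Kz ^+ 2)) by ring.
  rewrite eq in s.
  have nb := ler_normB (a1 * a2 - K1 * K2) (b - (K1 * K2 - Kz ^+ 2)).
  lra.
have P01 : forall x : R, 0 <= x -> x <= 1 -> 0 <= x <= 1 by move=> x ? ?; apply/andP.
have prod3 : `|ar * ai * aj - Krr * Kii * Kjj| <= 3 * δ.
  have m1 := mul_lip ar ai Krr Kii (n1 ar (P01 _ ar0 ar1)) (n1 Kii (P01 _ Ki0 Ki1)).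
  have m2 := mul_lip (ar * ai) aj (Krr * Kii) Kjj (sqb _ _ (P01 _ ar0 ar1) (P01 _ ai0 ai1)) (n1 Kjj (P01 _ Kj0 Kj1)).
  lra.
have tij := term ai aj bij Kii Kjj Kij ar Krr.
have trj := term ar aj brj Krr Kjj Krj ai Kii.
have tri := term ar ai bri Krr Kii Kri aj Kjj.
move: (tij (P01 _ ai0 ai1) (P01 _ aj0 aj1) (P01 _ Ki0 Ki1) (P01 _ Kj0 Kj1) pij (P01 _ ar0 ar1) ei ej eij er).
move: (trj (P01 _ ar0 ar1) (P01 _ aj0 aj1) (P01 _ Kr0 Kr1) (P01 _ Kj0 Kj1) prj (P01 _ ai0 ai1) er ej erj ei).
move: (tri (P01 _ ar0 ar1) (P01 _ ai0 ai1) (P01 _ Kr0 Kr1) (P01 _ Ki0 Ki1) pri (P01 _ aj0 aj1) er ei eri ej).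
move=> t1 t2 t3.
rewrite -[Num.sg Kri * _ * _]mulr1 -(gtr0_sg (ltr0n R 2)) -!sgrM.
apply: sg_close.
rewrite [X in _ < X]normrM [`|2|]ger0_norm // mulrC.
apply: (@le_lt_trans _ _ (16 * δ)); last lra.
rewrite ler_norml.
move: t1 t2 t3 prod3 ec; rewrite !ler_norml.
move=> /andP[? ?] /andP[? ?] /andP[? ?] /andP[? ?] /andP[? ?].
apply/andP; split; lra.
Qed.

End NumPart.
Section Main.
Variables (R : realType) (Omega : Type) (d : nat) (K0 : 'M[R]_d).
Variables (X : nat -> Omega -> {ffun 'I_d -> bool}) (T : nat) (w : Omega) (δ : R).
Hypothesis Ks : forall i j, K0 i j = K0 j i.
Hypothesis Knz : forall i j, K0 i j != 0.
Hypothesis pb : forall s, 0 <= ps R d K0 s <= 1.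
Hypothesis T0 : (0 < T)%N.
Hypothesis hd : forall i j k : 'I_d, 16 * δ < 2 * `|K0 i j * K0 j k * K0 i k|.
Definition mm (s : {set 'I_d}) := emp_mean R T (fun t => [forall j in s, X t w j]).
Hypothesis close : forall s, `|mm s - ps R d K0 s| <= δ.

Lemma emp_01 f : 0 <= emp_mean R T f <= 1.
Proof.
rewrite /emp_mean; have T0' : 0 < T%:R :> R by rewrite ltr0n.
apply/andP; split; first by rewrite divr_ge0 ?sumr_ge0 ?ler0n.
rewrite ler_pdivrMr // mul1r.
apply: le_trans (_ : \sum_(t < T) (1 : R) <= _).
  by apply: ler_sum => t _; case: (f t).
by rewrite sumr_const card_ord.
Qed.

Lemma mm1 i : Kdiag_hat R X T w i = mm [set i]%SET.
Proof.
rewrite /Kdiag_hat /mm; congr emp_mean; apply: funext => t.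
apply/idP/forall_inP => [h k /set1P -> //|h]; exact: h (set11 i).
Qed.

Lemma mm2 i j : emp_mean R T (fun t => X t w i && X t w j) = mm [set i; j]%SET.
Proof.
rewrite /mm; congr emp_mean; apply: funext => t.
apply/andP/forall_inP => [[hi hj] k|h]; first by rewrite !inE => /orP[] /eqP ->.
by split; apply: h; rewrite !inE eqxx ?orbT.
Qed.

Lemma mm3 r i j : emp_mean R T (fun t => [&& X t w r, X t w i & X t w j]) = mm [set r; i; j]%SET.
Proof.
rewrite /mm; congr emp_mean; apply: funext => t.
apply/and3P/forall_inP => [[hr hi hj] k|h]; first by rewrite !inE -!orbA => /or3P[] /eqP ->.
by split; apply: h; rewrite !inE eqxx ?orbT.
Qed.

Lemma absK_sym i j : absK_hat R X T w i j = absK_hat R X T w j i.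
Proof.
rewrite /absK_hat mulrC; congr (Num.sqrt (_ - _)); congr emp_mean.
by apply: funext => t; rewrite andbC.
Qed.

Lemma sgn_ok r i j : r != i -> r != j -> i != j ->
  sgn_hat R X T w r i j = Num.sg (K0 r i) * Num.sg (K0 i j) * Num.sg (K0 r j).
Proof.
move=> ri rj ij.
rewrite /sgn_hat /absK_hat !mm1 !mm2 mm3.
have P01 : forall x : R, 0 <= x <= 1 -> 0 <= x <= 1 by [].
have ps0 : forall s, 0 <= ps R d K0 s by move=> s; case/andP: (pb s).
have e1 := ps1 _ _ _ Ks; have e2 := ps2 _ _ _ Ks.
apply: (@sign_est R (K0 r r) (K0 i i) (K0 j j) (K0 r i) (K0 i j) (K0 r j) _ _ _ _ _ _ _ δ).
- exact: emp_01.
- exact: emp_01.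
- exact: emp_01.
- by rewrite -e1.
- by rewrite -e1.
- by rewrite -e1.
- by rewrite -e2.
- by rewrite -e2.
- by rewrite -e2.
- by rewrite -e1.
- by rewrite -e1.
- by rewrite -e1.
- by rewrite -e2.
- by rewrite -e2.
- by rewrite -e2.
- by have := close [set r; i; j]%SET; rewrite (ps3 _ _ _ Ks r i j ri rj ij).
- exact: hd.
Qed.

Definition Dr (r i : 'I_d) : R := if i == r then 1 else Num.sg (K0 r i).
Definition Bm (i j : 'I_d) : R :=
  if i == j then Kdiag_hat R X T w i else Num.sg (K0 i j) * absK_hat R X T w i j.

Lemma sg2 i j : Num.sg (K0 i j) * Num.sg (K0 i j) = 1.
Proof.
have := Knz i j; case: (ltrgtP (K0 i j) 0) => h _.
- by rewrite ltr0_sg // mulrNN mulr1.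
- by rewrite gtr0_sg // mulr1.
- by move: (Knz i j); rewrite h eqxx.
Qed.

Lemma Dr2 r i : Dr r i * Dr r i = 1.
Proof. by rewrite /Dr; case: (i == r); rewrite ?mulr1 ?sg2. Qed.

Lemma Dr_pm r i : Dr r i = 1 \/ Dr r i = -1.
Proof.
rewrite /Dr; case: (i == r); first by left.
have := Knz r i; case: (ltrgtP (K0 r i) 0) => h _.
- by right; rewrite ltr0_sg.
- by left; rewrite gtr0_sg.
- by move: (Knz r i); rewrite h eqxx.
Qed.

Lemma Khat_dec r i j : K_hat R X T w r i j = Dr r i * Dr r j * Bm i j.
Proof.
rewrite /K_hat mxE /Bm.
case: (eqVneq i j) => [<-|ij]; first by rewrite Dr2 mul1r.
case: (eqVneq i r) => [ir|ir].
  subst i; have jr : j != r by rewrite eq_sym.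
  by rewrite ?eqxx /Dr eqxx (negbTE jr) mul1r mulrA sg2 mul1r.
case: (eqVneq j r) => [jr|jr].
  subst j; rewrite ?eqxx /Dr eqxx (negbTE ir) mulr1 mulrA [K0 i r]Ks absK_sym sg2.
  by rewrite mul1r.
rewrite sgn_ok; [|by rewrite eq_sym|by rewrite eq_sym|by []].
rewrite /Dr ?(negbTE ir) ?(negbTE jr).
ring.
Qed.

Lemma det_main r r' : exists D : 'I_d -> R, (forall i, D i = 1 \/ D i = -1) /\
  K_hat R X T w r = diag_mx (\row_i D i) *m K_hat R X T w r' *m diag_mx (\row_i D i).
Proof.
exists (fun i => Dr r i * Dr r' i); split.
  move=> i; case: (Dr_pm r i) => ->; case: (Dr_pm r' i) => ->;
    rewrite ?mulr1 ?mulrN1 ?opprK; by [left|right].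
have KM : forall r0, K_hat R X T w r0 = \matrix_(i, j) (Dr r0 i * Dr r0 j * Bm i j).
  by move=> r0; apply/matrixP => i j; rewrite Khat_dec mxE.
apply/matrixP => i j; rewrite !KM mul_diag_mx mul_mx_diag !mxE.
have h1 := Dr2 r' i; have h2 := Dr2 r' j.
transitivity (Dr r i * Dr r j * Bm i j * (Dr r' i * Dr r' i) * (Dr r' j * Dr r' j)).
  by rewrite h1 h2 !mulr1.
ring.
Qed.

End Main.
Theorem proposition6 (R : realType) (dsp : measure_display)
  (Omega : measurableType dsp) (P : probability Omega R)
  (d : nat) (K0 : 'M[R]_d)
  (X : nat -> Omega -> {ffun 'I_d -> bool}) (r r' : 'I_d) :
  (3 <= d)%N ->
  K0^T = K0 ->
  (forall a : R, eigenvalue K0 a -> 0 < a < 1) ->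
  (forall i j, K0 i j != 0) ->
  (forall t (v : {ffun 'I_d -> bool}), measurable (X t @^-1` [set v])) ->
  (forall t, is_DPP P K0 (X t)) ->
  mutually_independent P X ->
  {ae P, forall w, exists N : nat, forall T : nat, (N <= T)%N ->
     exists D : 'I_d -> R, (forall i, D i = 1 \/ D i = -1) /\
       @K_hat R _ _ X T w r = diag_mx (\row_i D i) *m @K_hat R _ _ X T w r' *m diag_mx (\row_i D i)}.
Proof.
move=> d3 Ksym Heig Knz mX DPP indep.
have Ks : forall i j, K0 i j = K0 j i by move=> i j; rewrite -{1}Ksym mxE.
pose Ss (s : {set 'I_d}) : {set {ffun 'I_d -> bool}} := [set v : {ffun 'I_d -> bool} | [forall j in s, v j]]%SET.
have HP : forall s t, P (X t @^-1` [set v | v \in Ss s]) = (ps R d K0 s)%:E.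
  move=> s t; rewrite -(DPP t s) /ps; congr (P _); apply/seteqP; split => w /=; rewrite inE.
    by move=> /forall_inP.
  by move=> h; apply/forall_inP.
have pb : forall s, 0 <= ps R d K0 s <= 1.
  by move=> s; rewrite (p_ge0 P X (Ss s) _ (HP s)) (p_le1 P X mX (Ss s) _ (HP s)).
pose μ := \big[Order.min/1]_(x : 'I_d * 'I_d * 'I_d) `|K0 x.1.1 x.1.2 * K0 x.1.2 x.2 * K0 x.1.1 x.2|.
have μ0 : 0 < μ.
  by apply: lt_bigmin => // x _; rewrite normr_gt0 !mulf_neq0.
pose δ := μ / 16.
have δ0 : 0 < δ by rewrite divr_gt0.
have hd : forall i j k : 'I_d, 16 * δ < 2 * `|K0 i j * K0 j k * K0 i k|.
  move=> i j k.
  have h1 := bigmin_le 1 ((i, j), k) (fun x : 'I_d * 'I_d * 'I_d => `|K0 x.1.1 x.1.2 * K0 x.1.2 x.2 * K0 x.1.1 x.2|).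
  have h2 : 0 < `|K0 i j * K0 j k * K0 i k| by rewrite normr_gt0 !mulf_neq0.
  rewrite /δ mulrC divfK; last by rewrite pnatr_eq0.
  rewrite -/μ /= in h1.
  lra.
have Hae := fun s => slln P X mX indep (Ss s) _ (HP s) δ δ0.
have Hall := @filter_forall _ _ _ _ (ae_filter_ringOfSetsType P) Hae.
apply: (@filterS _ _ (ae_filter_ringOfSetsType P) _ _ _ Hall) => w Hw.
have [Nf HN] := fin_all_exists Hw.
exists (\max_s Nf s).+1 => T hT.
have T0 : (0 < T)%N by apply: leq_trans hT.
apply: det_main => //.
move=> s; have := HN s T.-1 (leq_trans (leq_bigmax s) _).
rewrite prednK //.
have hm : (\max_i Nf i <= T.-1)%N by rewrite -ltnS prednK.
move=> /(_ hm) H.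
rewrite /mm /emp_mean.
have Heq : \sum_(i < T) (((X i w \in Ss s) : nat)%:R - ps R d K0 s) =
    \sum_(t < T) (([forall j in s, X t w j]) : nat)%:R - T%:R * ps R d K0 s.
  rewrite sumrB sumr_const card_ord mulr_natl; congr (_ - _).
  by apply eq_bigr => i _; rewrite inE.
rewrite Heq in H.
have Tn : T%:R != 0 :> R by rewrite pnatr_eq0 -lt0n.
have Tp : 0 < T%:R :> R by rewrite ltr0n.
have -> : (\sum_(t < T) (([forall j in s, X t w j]) : nat)%:R) / T%:R - ps R d K0 s =
    (\sum_(t < T) (([forall j in s, X t w j]) : nat)%:R - T%:R * ps R d K0 s) / T%:R.
  by field.
rewrite normrM normfV [`|T%:R|]ger0_norm ?ler0n // ler_pdivrMr // mulrC.
by rewrite [δ * _]mulrC [ps R d K0 s * _]mulrC ltW.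
Qed.
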